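(* Let $3\le t\le w<n$ and suppose a Steiner system $S(t,w,n)$ exists. Then $$q'_0(t,w,n)\le \frac{\binom{n-1}{t-1}}{\binom{w-1}{t-1}}-\frac{\binom{n-t+2}{2}}{\binom{w-t+2}{2}}+\min_{S}\ \max_{D\in S'}\ \chi(D)+1,$$ where the minimum is over all Steiner systems $S$ of type $S(t,w,n)$ and $S'$ is the set of all $S(2,w-t+2,n-t+2)$ systems derived from $S$ (by removing a $(t-2)$-subset of points).
   Context: $\mathbb{Z}_q=\{0,\dots,q-1\}$ (an alphabet); $\mathrm{wt}$ = number of nonzero coordinates; $d$ = Hamming distance; $J_q(n,w)$ = weight-$w$ words of $\mathbb{Z}_q^n$. An $(n,w,d)_q$ code of size $M$ is a subset $C\subseteq J_q(n,w)$ with $|C|=M$ and pairwise distances at least $d$. A Steiner system $S(t,k,n)$ is a pair $(N,B)$, $|N|=n$, $B$ a set of $k$-subsets (blocks) of $N$ with every $t$-subset of $N$ in exactly one block. For $\alpha\subset N$ with $0<|\alpha|<t$, the derived system is $(N\setminus\alpha,\{\beta\setminus\alpha:\alpha\subseteq\beta\in B\})$, an $S(t-|\alpha|,k-|\alpha|,n-|\alpha|)$. For an $S(2,k,n)$ system $D$, $\chi(D)$ is the minimum number of classes in a partition of its blocks such that distinct blocks in the same class are disjoint. For $t,k,n$ such that an $S(t,k,n)$ exists, $q'_0(t,k,n)$ is the smallest $q$ for which an $(n,k,2k-t+1)_q$ code of size $\binom{n}{t}/\binom{k}{t}$ exists. *)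

(* Defs.v *)
From mathcomp Require Import all_boot all_order all_algebra.
Set Implicit Arguments. Unset Strict Implicit. Unset Printing Implicit Defensive.

Definition word (n q : nat) := {ffun 'I_n -> 'I_q}.

Definition wt n q (x : word n q) : nat := #|[set i | val (x i) != 0%N]|.

Definition hdist n q (x y : word n q) : nat := #|[set i | x i != y i]|.

Definition is_code (n w d q M : nat) (C : {set word n q}) : Prop :=
  [/\ #|C| = M,
      (forall x, x \in C -> wt x = w) &
      (forall x y, x \in C -> y \in C -> x != y -> d <= hdist x y)].

Arguments is_code : clear implicits.
Definition code_exists (n w d q M : nat) : Prop :=
  exists C : {set word n q}, is_code n w d q M C.

Arguments code_exists : clear implicits.

Definition steiner (t k n : nat) (B : {set {set 'I_n}}) : Prop :=
  (forall b, b \in B -> #|b| = k) /\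
  (forall T : {set 'I_n}, #|T| = t -> #|[set b in B | T \subset b]| = 1%N).

Arguments steiner : clear implicits.

(* Blocks of the system derived from B at alpha (on the point set 'I_n \ alpha). *)
Definition derived n (B : {set {set 'I_n}}) (alpha : {set 'I_n}) : {set {set 'I_n}} :=
  [set b :\: alpha | b in [set b in B | alpha \subset b]].

(* The blocks of D can be partitioned into at most k classes such that
   distinct blocks in the same class are disjoint: each block b of D gets a
   class c b = Some i with i < k (non-blocks are ignored). *)
Definition parallel_colorable n (D : {set {set 'I_n}}) (k : nat) : bool :=
  [exists c : {ffun {set 'I_n} -> option 'I_k},
    [forall b in D, c b != None] &&
    [forall b1 in D, forall b2 in D,
       ((b1 != b2) && (c b1 == c b2)) ==> [disjoint b1 & b2]]].

Lemma parallel_colorable_card n (D : {set {set 'I_n}}) :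
  exists k, parallel_colorable D k.
Proof.
exists #|D|; apply/existsP.
exists [ffun b => insub (index b (enum D))]; apply/andP; split.
  apply/forallP => b; apply/implyP => bD; rewrite ffunE insubT //.
  by rewrite cardE index_mem mem_enum.
apply/forallP => b1; apply/implyP => b1D; apply/forallP => b2; apply/implyP => b2D.
apply/implyP => /andP [neq /eqP eqi]; exfalso; move/negP: neq; apply.
have h1 : b1 \in enum D by rewrite mem_enum.
have h2 : b2 \in enum D by rewrite mem_enum.
move: eqi; rewrite !ffunE.
case: insubP => [u1 _ v1|]; last by move=> /negP[]; rewrite cardE index_mem h1.
case: insubP => [u2 _ v2|]; last by move=> /negP[]; rewrite cardE index_mem h2.
move=> [] /(congr1 val); rewrite v1 v2 => eqi.
by rewrite -(nth_index b1 h1) eqi (nth_index b1 h2).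
Qed.

Definition chi n (D : {set {set 'I_n}}) : nat :=
  ex_minn (parallel_colorable_card D).

(* Main.v *)
Require Import Defs.
From mathcomp Require Import all_boot all_order all_algebra.
From mathcomp Require Import zify.

Section Count.
Variable n : nat.
Implicit Types (A U T b : {set 'I_n}).

Definition Pset A U t := [set T : {set 'I_n} | (A \subset T) && (T \subset U) && (#|T| == t)].

Lemma card_Pset A U t : A \subset U -> #|A| <= t ->
  #|Pset A U t| = 'C(#|U| - #|A|, t - #|A|).
Proof.
move=> AU At.
have -> : Pset A U t = (fun X => X :|: A) @: [set X : {set 'I_n} | X \subset U :\: A & #|X| == t - #|A|].
  apply/setP => T; rewrite !inE; apply/idP/imsetP.
  - move=> /andP [/andP [AT TU] /eqP cT]; exists (T :\: A).
      rewrite inE; apply/andP; split; first by apply: setSD.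
      by rewrite cardsD (setIidPr AT) cT.
    apply/setP => x; rewrite !inE; case: (x \in A) (x \in T) (subsetP AT x) => [] [] //=.
      by move=> ->.
  - move=> [X]; rewrite inE => /andP [XU /eqP cX] ->.
    have dXA : X :&: A = set0.
      apply/setP => x; rewrite !inE; apply/negP => /andP [xX xA].
      by move: (subsetP XU x xX); rewrite inE xA.
    rewrite subsetUr /= cardsU dXA cards0 subn0 cX subnK // eqxx andbT.
    rewrite subUset AU andbT; apply: subset_trans XU (subsetDl _ _).
- rewrite card_in_imset ?cards_draws ?cardsD ?(setIidPr AU) //.
  move=> X Y; rewrite !inE => /andP [XU _] /andP [YU _] E.
  apply/setP => x; move/setP: E => /(_ x); rewrite !inE.
  move: (subsetP XU x) (subsetP YU x); rewrite !inE.
  case: (x \in A) (x \in X) (x \in Y) => [] [] [] //= H1 H2 _; by move: (H1 isT).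
Qed.

Lemma count_blocks t w S A : steiner t w n S -> #|A| <= t -> t <= w ->
  #|[set b in S | A \subset b]| * 'C(w - #|A|, t - #|A|) = 'C(n - #|A|, t - #|A|).
Proof.
move=> [Sw St] At tw.
have H1 : \sum_(T in Pset A setT t) #|[set b in S | T \subset b]| = 'C(n - #|A|, t - #|A|).
  rewrite (eq_bigr (fun _ => 1)); last first.
    by move=> T; rewrite inE => /andP [_ /eqP]; apply: St.
  by rewrite sum1_card card_Pset ?subsetT // cardsT card_ord.
rewrite -H1.
rewrite (eq_bigr (fun T => \sum_(b | (b \in S) && (T \subset b)) 1)); last first.
  by move=> T _; rewrite sum1dep_card.
rewrite (exchange_big_dep (fun b => b \in S)); last by move=> i j _ /andP [].
rewrite /= (eq_bigr (fun b => if A \subset b then 'C(w - #|A|, t - #|A|) else 0)); last first.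
  move=> b bS; rewrite sum1dep_card.
  rewrite bS /=.
  have -> : [set x in Pset A setT t | x \subset b] = Pset A b t.
    by apply/setP => T; rewrite !inE subsetT andbT -!andbA; congr (_ && _); rewrite andbC.
  case: ifP => Ab; first by rewrite card_Pset // Sw.
  apply/eqP; rewrite cards_eq0; apply/eqP/setP => T; rewrite !inE.
  apply/negP => /andP [/andP [AT Tb] _]; move/negP: Ab; apply; exact: subset_trans AT Tb.
rewrite -big_mkcondr /= -sum1dep_card.
rewrite big_distrl /=; apply: eq_bigr => b _; by rewrite mul1n.
Qed.
End Count.
Section Alpha.
Variable n : nat.

Definition dist (j x : nat) := if j <= x then x - j else x + n - j.
Definition alpha (L : nat) (j : 'I_n) : {set 'I_n} := [set x : 'I_n | dist j x < L].

Lemma alpha_mem L j : 0 < L -> j \in alpha L j.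
Proof. by move=> L0; rewrite inE /dist leqnn subnn. Qed.

Lemma dist_lt (j x : 'I_n) : dist j x < n.
Proof. have := ltn_ord j; have := ltn_ord x; rewrite /dist; case: ifP => ?; lia. Qed.

Lemma alpha_card L j : L <= n -> #|alpha L j| = L.
Proof.
move=> Ln.
pose f (x : 'I_n) : 'I_n := Ordinal (dist_lt j x).
have finj : injective f.
  move=> x y /(congr1 val) /=; have := ltn_ord j; have := ltn_ord x; have := ltn_ord y.
  rewrite /dist; move=> hy hx hj; case: ifP => h1; case: ifP => h2 => E; apply/val_inj => /=; lia.
have -> : alpha L j = f @^-1: [set widen_ord Ln k | k in 'I_L].
  apply/setP => x; rewrite !inE; apply/idP/imsetP.
  - move=> h; exists (Ordinal h) => //; exact: val_inj.
  - by move=> [k _ /(congr1 val) /= ->].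
rewrite card_preimset // card_imset ?cardsT ?card_ord //.
by move=> a b /(congr1 val) /= E; apply: val_inj.
Qed.

Lemma alpha_inj L : 0 < L -> L < n -> injective (alpha L).
Proof.
move=> L0 Ln i j E.
have hi : (if i == 0 :> nat then n - 1 else i - 1) < n.
  have := ltn_ord i; case: ifP => _; lia.
pose p := Ordinal hi.
have pi : p \notin alpha L i.
  rewrite inE /dist /=; have := ltn_ord i; case: (boolP (i == 0 :> nat)) => /= h0; case: ifP => h1; lia.
have ii : i \in alpha L i by apply: alpha_mem.
rewrite E !inE in pi ii.
apply/val_inj; move: pi ii; rewrite /dist /=; have := ltn_ord i; have := ltn_ord j.
case: (boolP (i == 0 :> nat)) => /= h0; case: ifP => h1; case: ifP => h2; lia.
Qed.
End Alpha.

Arguments alpha {n}.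
Arguments dist : clear implicits.
Definition colf {n} (D : {set {set 'I_n}}) (X : {set 'I_n}) : nat :=
  match [pick c : {ffun {set 'I_n} -> option 'I_(chi D)} |
     [forall b in D, c b != None] &&
     [forall b1 in D, forall b2 in D,
       ((b1 != b2) && (c b1 == c b2)) ==> [disjoint b1 & b2]]] with
  | Some c => if c X is Some j then val j else 0
  | None => 0 end.

Lemma colf_spec n (D : {set {set 'I_n}}) :
  (forall X, X \in D -> colf D X < chi D) /\
  (forall X Y, X \in D -> Y \in D -> X != Y -> colf D X = colf D Y -> [disjoint X & Y]).
Proof.
have Pc : parallel_colorable D (chi D) by rewrite /chi; case: ex_minnP.
rewrite /colf; case: pickP => [c /andP [/forallP H1 /forallP H2] | H]; last first.
  by move/existsP: Pc => [c Hc]; move: (H c); rewrite Hc.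
split.
  move=> X XD; move: (H1 X); rewrite XD /=; case: (c X) => // j _; exact: ltn_ord.
move=> X Y XD YD XY.
move: (H1 X) (H1 Y); rewrite XD YD /=.
case EX: (c X) => [jx|] // _; case EY: (c Y) => [jy|] // _ E.
move: (H2 X) => /implyP /(_ XD) /forallP /(_ Y) /implyP /(_ YD) /implyP; apply.
by rewrite XY EX EY /=; apply/eqP; congr Some; apply: val_inj.
Qed.

Lemma big_subset_contra n (S : {set {set 'I_n}}) t w (b1 b2 : {set 'I_n}) :
  steiner t w n S -> b1 \in S -> b2 \in S -> b1 != b2 -> #|b1 :&: b2| < t.
Proof.
move=> [_ St] b1S b2S ne; rewrite ltnNge; apply/negP => ts.
have : 0 < #|[set T : {set 'I_n} | T \subset b1 :&: b2 & #|T| == t]|.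
  by rewrite cards_draws bin_gt0.
move/card_gt0P => [T]; rewrite inE => /andP [TI /eqP cT].
have := St T cT.
have : [set b1; b2] \subset [set b in S | T \subset b].
  apply/subsetP => b; rewrite !inE => /orP [] /eqP ->.
    by rewrite b1S (subset_trans TI (subsetIl _ _)).
  by rewrite b2S (subset_trans TI (subsetIr _ _)).
move/subset_leq_card; rewrite cards2 ne => h1 h2; by rewrite h2 in h1.
Qed.

Lemma aux1 c d K : c < K -> c.+1 = K + 1 + d -> False. Proof. lia. Qed.
Lemma aux2 c d K : c < K -> K + 1 + d = c.+1 -> False. Proof. lia. Qed.
Lemma aux3 K a b : K + 1 + a = K + 1 + b -> a = b. Proof. lia. Qed.
Lemma aux4 a t : a < t -> a + 0 <= t - 1. Proof. lia. Qed.
Lemma aux5 g t : 2 < t -> g <= 1 -> t - 2 + g <= t - 1. Proof. lia. Qed.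
Lemma aux6 a g t w : a + g <= t - 1 -> a < t -> a <= w -> t <= w -> 2 * w - t + 1 <= w + w - a - g.
Proof. lia. Qed.

Local Open Scope ring_scope.
Theorem mainTheorem12 (t w n : nat) :
  (3 <= t)%N -> (t <= w)%N -> (w < n)%N ->
  (exists B : {set {set 'I_n}}, steiner t w n B) ->
  forall S : {set {set 'I_n}}, steiner t w n S ->
  exists q : nat,
    code_exists n w (2 * w - t + 1) q ('C(n, t) %/ 'C(w, t)) /\
    (q%:Z <= ('C(n.-1, t.-1) %/ 'C(w.-1, t.-1))%:Z
             - ('C(n - t + 2, 2) %/ 'C(w - t + 2, 2))%:Z
             + (\max_(alpha : {set 'I_n} | #|alpha| == (t - 2)%N)
                   chi (derived S alpha))%:Z
             + 1).
Proof.
move=> t3 tw wn _ S HS.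
Local Close Scope ring_scope.
have [Sw St] := HS.
set r := 'C(n.-1, t.-1) %/ 'C(w.-1, t.-1).
set bD := 'C(n - t + 2, 2) %/ 'C(w - t + 2, 2).
set K := \max_(alpha : {set 'I_n} | #|alpha| == (t - 2)%N) chi (derived S alpha).
set L := t - 2.
have Lpos : 0 < L by rewrite /L; lia.
have Ln : L < n by rewrite /L; lia.
have Nr : forall i : 'I_n, #|[set b in S | i \in b]| = r.
  move=> i; have := count_blocks n t w S [set i] HS.
  rewrite cards1 => /(_ (leq_trans _ t3) tw).
  have -> : [set b in S | [set i] \subset b] = [set b in S | i \in b].
    by apply/setP => b; rewrite !inE sub1set.
  rewrite /r !subn1 => <- //; rewrite mulnK // bin_gt0; lia.
have NbD : forall A : {set 'I_n}, #|A| = L -> #|[set b in S | A \subset b]| = bD.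
  move=> A cA; have := count_blocks n t w S A HS; rewrite cA => /(_ _ tw).
  have e1 : t - L = 2 by rewrite /L; lia.
  have e2 : w - L = w - t + 2 by rewrite /L; lia.
  have e3 : n - L = n - t + 2 by rewrite /L; lia.
  rewrite /bD e1 e2 e3 => <-; last by rewrite /L; lia.
  rewrite mulnK // bin_gt0; lia.
have NS : #|S| = 'C(n, t) %/ 'C(w, t).
  have := count_blocks n t w S set0 HS; rewrite cards0 !subn0 => /(_ (leq0n _) tw).
  have -> : [set b in S | set0 \subset b] = S by apply/setP => b; rewrite !inE sub0set andbT.
  move=> <-; rewrite mulnK // bin_gt0 //.
have i0 : 'I_n by exists 0; lia.
have bDr : bD <= r.
  rewrite -(Nr i0) -(NbD (alpha L i0)) ?alpha_card ?(ltnW Ln) //.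
  apply: subset_leq_card; apply/subsetP => b; rewrite !inE => /andP [-> /subsetP]; apply.
  exact: alpha_mem.
pose al (i : 'I_n) := alpha L i.
have alc : forall i, #|al i| = L by move=> i; rewrite alpha_card // ltnW.
have ali : forall i, i \in al i by move=> i; apply: alpha_mem.
pose E (i : 'I_n) := [set b in S | (i \in b) && ~~ (al i \subset b)].
pose D i := derived S (al i).
pose sym (b : {set 'I_n}) (i : 'I_n) : nat := if i \in b then
   (if al i \subset b then (colf (D i) (b :\: al i)).+1
    else K + 1 + index b (enum (E i))) else 0.
pose Q := (r - bD) + K.
have cardEi : forall i, #|E i| = r - bD.
  move=> i; rewrite -(Nr i) -(NbD (al i) (alc i)).
  have -> : E i = [set b in S | i \in b] :\: [set b in S | al i \subset b].
    by apply/setP => b; rewrite !inE; case: (b \in S) (i \in b) (al i \subset b) => [] [] [].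
  rewrite cardsD (setIidPr _) //; apply/subsetP => b; rewrite !inE => /andP [-> /subsetP]; apply.
  exact: ali.
have inD : forall i b, b \in S -> al i \subset b -> b :\: al i \in D i.
  by move=> i b bS ab; apply/imsetP; exists b => //; rewrite inE bS ab.
have chiK : forall i, chi (D i) <= K.
  move=> i; rewrite /K; apply: (@leq_bigmax_cond _ (fun a : {set 'I_n} => #|a| == (t - 2)%N) (fun a => chi (derived S a)) (al i)).
  by rewrite alc.
have colK : forall i b, b \in S -> al i \subset b -> (colf (D i) (b :\: al i)).+1 <= K.
  move=> i b bS ab; apply: leq_trans (chiK i); have [h _] := colf_spec n (D i); exact: h (inD i b bS ab).
have idxE : forall i b, b \in E i -> index b (enum (E i)) < r - bD.
  by move=> i b bE; rewrite -(cardEi i) cardE index_mem mem_enum.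
have symQ : forall b i, b \in S -> sym b i <= Q.
  move=> b i bS; rewrite /sym /Q; case: ifP => // ib; case: ifP => ab.
    have := colK i b bS ab; move: (colf _ _) => c; lia.
  have : b \in E i by rewrite inE bS ib ab.
  move/idxE; move: (index _ _) => c; lia.
have sym0 : forall b i, (sym b i != 0) = (i \in b).
  move=> b i; rewrite /sym; case: ifP => // _; case: ifP => _ //.
  by rewrite addn1.
pose cw (b : {set 'I_n}) : {ffun 'I_n -> 'I_Q.+1} := [ffun i => inord (sym b i)].
have cwE : forall b i, b \in S -> val (cw b i) = sym b i.
  by move=> b i bS; rewrite ffunE; apply: inordK; rewrite ltnS symQ.
have supp : forall b, b \in S -> [set i | val (cw b i) != 0] = b.
  by move=> b bS; apply/setP => i; rewrite inE cwE // sym0.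
exists Q.+1; split; last first.
  rewrite /Q -/r -/bD -/K.
  move: bDr; move: (r) (bD) (K) => x y z; clear; lia.
exists (cw @: S); split.
- rewrite card_in_imset // => b1 b2 b1S b2S Eq.
  by rewrite -(supp b1 b1S) -(supp b2 b2S) Eq.
- by move=> x /imsetP [b bS ->]; rewrite /wt supp // Sw.
move=> x y /imsetP [b1 b1S ->] /imsetP [b2 b2S ->] ne.
have ne' : b1 != b2 by apply: contraNneq ne => ->.
set I := b1 :&: b2.
set Ag := [set i in I | cw b1 i == cw b2 i].
have eqv : forall i, (cw b1 i == cw b2 i) = (sym b1 i == sym b2 i).
  by move=> i; rewrite -val_eqE /= !cwE.
have dis : [set i | cw b1 i != cw b2 i] = (b1 :|: b2) :\: Ag.
  apply/setP => i; rewrite !inE eqv.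
  move: (sym0 b1 i) (sym0 b2 i).
  case: (i \in b1); case: (i \in b2) => /=; move: (sym b1 i) (sym b2 i) => u v; lia.
have AgU : Ag \subset b1 :|: b2.
  by apply/subsetP => i; rewrite !inE => /andP [/andP [-> _] _].
have sI : #|I| < t by exact: (big_subset_contra n S t w b1 b2 HS b1S b2S ne').
have sw : #|I| <= w by rewrite -(Sw b1 b1S); apply: subset_leq_card; apply: subsetIl.
have agr : forall i, i \in Ag -> I = al i.
  move=> i; rewrite !inE eqv => /andP [/andP [ib1 ib2] /eqP]; rewrite /sym ib1 ib2.
  case ab1: (al i \subset b1); case ab2: (al i \subset b2).
  - move=> /eq_add_S ec.
    have XY : b1 :\: al i != b2 :\: al i.
      have eb : forall b : {set 'I_n}, al i \subset b -> b = (b :\: al i) :|: al i.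
        move=> b ab; apply/setP => z; have := subsetP ab z; rewrite !inE.
        by case: (_ < L) => /=; case: (z \in b) => //= /(_ isT).
      by apply: contra ne' => /eqP XY; rewrite (eb b1 ab1) (eb b2 ab2) XY.
    have [_ h] := colf_spec n (D i).
    move: (h _ _ (inD i b1 b1S ab1) (inD i b2 b2S ab2) XY ec) => /disjoint_setI0 dj.
    apply/eqP; rewrite eqEsubset; apply/andP; split; last by rewrite /I subsetI ab1 ab2.
    apply/subsetP => z.
    rewrite inE => /andP [z1 z2]; apply/negPn/negP => za.
    move: za; rewrite inE => za.
    by move/setP: dj => /(_ z); rewrite !inE z1 z2 za.
  - move=> ee; exfalso; exact: aux1 (colK i b1 b1S ab1) ee.
  - move=> ee; exfalso; exact: aux2 (colK i b2 b2S ab2) ee.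
  - move=> ei.
    have e1 : b1 \in enum (E i) by rewrite mem_enum inE b1S ib1 ab1.
    have e2 : b2 \in enum (E i) by rewrite mem_enum inE b2S ib2 ab2.
    have ei' : index b1 (enum (E i)) = index b2 (enum (E i)) by exact: aux3 ei.
    exfalso; move/negP: ne'; apply; apply/eqP.
    by rewrite -(nth_index b1 e1) ei' (nth_index b1 e2).
have key : #|I| + #|Ag| <= t - 1.
  case: (set_0Vmem Ag) => [-> | [i iAg]]; first by rewrite cards0; apply: aux4.
  have IA := agr i iAg.
  have : Ag \subset [set i].
    apply/subsetP => j jAg; rewrite inE; apply/eqP.
    have hinj : injective al by apply: alpha_inj.
    by apply: hinj; rewrite -(agr j jAg) -IA.
  move/subset_leq_card; rewrite cards1 IA alc /L; exact: aux5.
rewrite /hdist dis cardsD (setIidPr AgU) cardsU -/I (Sw b1 b1S) (Sw b2 b2S).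
exact: aux6 key sI sw tw.
Qed.
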